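(* Let $G$ be a graph of minimum degree at least $2$, and let $\Omega$ be a total $2$-coalition partition of $G$. Then (i) $\Delta(\mathrm{TC}_2\mathrm{G}(G,\Omega))\le \Delta(G)-1$, and (ii) $\beta(\mathrm{TC}_2\mathrm{G}(G,\Omega))\le \delta(G)-1$.
   Context: All graphs are finite, simple and connected. $N(v)$ denotes the open neighborhood of $v$. A set $S\subseteq V(G)$ is a total $2$-dominating set if $|N(v)\cap S|\ge 2$ for every $v\in V(G)$. Two disjoint sets $U,W\subseteq V(G)$ form a total $2$-coalition if neither is a total $2$-dominating set but $U\cup W$ is. A total $2$-coalition partition of $G$ is a partition $\Omega$ of $V(G)$ in which every set forms a total $2$-coalition with some other set of $\Omega$. The total $2$-coalition graph $\mathrm{TC}_2\mathrm{G}(G,\Omega)$ has vertex set $\Omega$, two sets being adjacent if they form a total $2$-coalition in $G$. $\Delta(H)$ is the maximum degree and $\beta(H)$ the vertex cover number of a graph $H$. *)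

(* Defs.v *)
From mathcomp Require Import all_boot.
Set Implicit Arguments. Unset Strict Implicit. Unset Printing Implicit Defensive.

Definition simple_graph (T : finType) (e : rel T) : Prop :=
  symmetric e /\ irreflexive e.
Definition connected_graph (T : finType) (e : rel T) : Prop :=
  forall x y : T, connect e x y.

Definition nbhd (T : finType) (e : rel T) (v : T) : {set T} := [set u | e v u].
Definition deg (T : finType) (e : rel T) (v : T) : nat := #|nbhd e v|.

Definition maxdeg (T : finType) (e : rel T) : nat := \max_(v : T) deg e v.
Definition mindeg (T : finType) (e : rel T) : nat :=
  \big[minn/#|T|]_(v : T) deg e v.

Definition total2dom (T : finType) (e : rel T) (S : {set T}) : bool :=
  [forall v : T, 2 <= #|nbhd e v :&: S|].

Definition total2coal (T : finType) (e : rel T) (U W : {set T}) : bool :=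
  [&& [disjoint U & W], ~~ total2dom e U, ~~ total2dom e W
    & total2dom e (U :|: W)].

Definition total2coal_partition (T : finType) (e : rel T)
  (Om : {set {set T}}) : bool :=
  partition Om [set: T] &&
  [forall U in Om, exists W in Om, total2coal e U W].

Definition tc2g_adj (T : finType) (e : rel T) (Om : {set {set T}})
  (X Y : {set T}) : bool :=
  [&& X \in Om, Y \in Om & total2coal e X Y].

Definition tc2g_maxdeg (T : finType) (e : rel T) (Om : {set {set T}}) : nat :=
  \max_(X in Om) #|[set Y in Om | tc2g_adj e Om X Y]|.

Definition tc2g_vcover (T : finType) (e : rel T) (Om C : {set {set T}}) : bool :=
  (C \subset Om) &&
  [forall X in Om, forall Y in Om, tc2g_adj e Om X Y ==> (X \in C) || (Y \in C)].

Definition tc2g_vcnum (T : finType) (e : rel T) (Om : {set {set T}}) : nat :=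
  \big[minn/#|Om|]_(C : {set {set T}} | tc2g_vcover e Om C) #|C|.

(* Main.v *)
Require Import Defs.
From mathcomp Require Import all_boot.
From mathcomp Require Import zify.

Lemma two_other (T : finType) (S : {set T}) (u0 : T) :
  2 <= #|S| -> exists2 a, a \in S & a != u0.
Proof.
move=> H; have : 0 < #|S :\ u0|.
  move: H; rewrite (cardsD1 u0 S); case: (u0 \in S) => /= H; lia.
case/card_gt0P=> a; rewrite !inE => /andP[Ha1 Ha2]; by exists a.
Qed.

Lemma mindeg_witness (T : finType) (e : rel T) :
  2 <= mindeg e -> exists v, deg e v <= mindeg e.
Proof.
rewrite /mindeg => H.
have [v0 _] : exists v0 : T, true.
  case: (pickP (@predT T)) => [x _|H0]; first by exists x.
  by move: H; rewrite big_pred0 // (eq_card0 H0).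
apply: (big_ind (fun x => exists v, deg e v <= x)).
- by exists v0; rewrite /deg max_card.
- move=> x y [v Hv] [w Hw]; case: (leqP x y) => Hxy.
  + by exists v.
  + by exists w.
- by move=> i _; exists i.
Qed.

Lemma bigmin_le (T : finType) (n : nat) (F : T -> nat) (v : T) :
  \big[minn/n]_(i : T) F i <= F v.
Proof.
rewrite -big_filter.
have : v \in [seq i <- index_enum T | true] by rewrite filter_predT mem_index_enum.
elim: [seq i <- index_enum T | true] => [//|a s IH].
rewrite inE big_cons => /orP[/eqP->|H]; first exact: geq_minl.
by rewrite geq_min IH ?orbT.
Qed.

Lemma bigmin_le_cond (T : finType) (n : nat) (P : pred T) (F : T -> nat) (v : T) :
  P v -> \big[minn/n]_(i | P i) F i <= F v.
Proof.
move=> Pv; rewrite -big_filter.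
have : v \in [seq i <- index_enum T | P i] by rewrite mem_filter Pv mem_index_enum.
elim: [seq i <- index_enum T | P i] => [//|a s IH].
rewrite inE big_cons => /orP[/eqP->|H]; first exact: geq_minl.
by rewrite geq_min IH ?orbT.
Qed.

Theorem lemma3p4 (T : finType) (e : rel T) (Om : {set {set T}}) :
  simple_graph e -> connected_graph e ->
  2 <= mindeg e ->
  total2coal_partition e Om ->
  tc2g_maxdeg e Om <= maxdeg e - 1 /\
  tc2g_vcnum e Om <= mindeg e - 1.
Proof.
move=> _ _ Hmin /andP[Hpart /forall_inP Hco].
case/and3P: Hpart => /eqP Hcov Htriv _.
have inCov : forall x, x \in cover Om by move=> x; rewrite Hcov inE.
have degge : forall v, 2 <= deg e v.
  move=> v; apply: leq_trans Hmin _; rewrite /mindeg.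
  exact: bigmin_le.
have key : forall v u0 X Y, total2coal e X Y ->
    exists2 a, a \in nbhd e v :&: (X :|: Y) & a != u0.
  move=> v u0 X Y /and4P[_ _ _ /forallP /(_ v) H2].
  exact: two_other.
have sub : forall v u0 (P : {set {set T}}),
    u0 \in nbhd e v ->
    (forall Y, Y \in P -> exists2 a, a \in nbhd e v :\ u0 & a \in Y) ->
    P \subset Om -> #|P| <= deg e v - 1.
  move=> v u0 P Hu0 HP POm.
  have -> : deg e v - 1 = #|nbhd e v :\ u0|.
    by rewrite /deg (cardsD1 u0 (nbhd e v)) Hu0 add1n subn1.
  apply: leq_trans (leq_imset_card (pblock Om) _).
  apply: subset_leq_card; apply/subsetP => Y YP.
  have [a Ha aY] := HP Y YP.
  apply/imsetP; exists a => //.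
  by rewrite (def_pblock Htriv (subsetP POm Y YP) aY).
split.
- apply/bigmax_leqP => X XOm.
  have [W _ HXW] := exists_inP (Hco X XOm).
  move/and4P: HXW => [_ ndX _ _].
  move: ndX; rewrite negb_forall => /existsP[v]; rewrite -ltnNge ltnS => Hv.
  have [u0 Hu0 Hu0X] : exists2 u0, u0 \in nbhd e v &
      forall a, a \in nbhd e v -> a \in X -> a = u0.
    case: (set_0Vmem (nbhd e v :&: X)) => [H0|[x0 Hx0]].
    + have : 0 < deg e v by apply: leq_trans (degge v).
      case/card_gt0P => u0 Hu0; exists u0 => // a Ha HaX.
      by have := in_set0 a; rewrite -H0 inE Ha HaX.
    + move: (Hx0); rewrite inE => /andP[Hx0a _]; exists x0 => // a Ha HaX.
      have Ha' : a \in nbhd e v :&: X by rewrite inE Ha HaX.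
      exact: (card_le1_eqP Hv).
  apply: leq_trans (sub v u0 _ Hu0 _ _) _.
  + move=> Y; rewrite inE => /andP[_ /and3P[_ _ HXY]].
    have [a] := key v u0 X Y HXY.
    rewrite !inE => /andP[Ha /orP[aX|aY]] anu.
    * by move: anu; rewrite (Hu0X a ltac:(by rewrite inE) aX) eqxx.
    * by exists a => //; rewrite !inE anu Ha.
  + by apply/subsetP => Y; rewrite inE => /andP[].
  + by rewrite leq_sub2r // /maxdeg (leq_bigmax v).
- have [v Hv] := @mindeg_witness _ _ Hmin.
  have : 0 < deg e v by apply: leq_trans (degge v).
  case/card_gt0P => u0 Hu0.
  set C := pblock Om @: (nbhd e v :\ u0).
  have CO : C \subset Om.
    by apply/subsetP => Y /imsetP[a _ ->]; apply: pblock_mem.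
  have Ccov : tc2g_vcover e Om C.
    rewrite /tc2g_vcover CO /=; apply/forall_inP => X XOm; apply/forall_inP => Y YOm.
    apply/implyP => /and3P[_ _ HXY].
    have [a] := key v u0 X Y HXY.
    rewrite !inE => /andP[Ha aXY] anu.
    have aC : pblock Om a \in C by apply/imsetP; exists a => //; rewrite !inE anu Ha.
    case/orP: aXY => [aX|aY].
    + by rewrite -(def_pblock Htriv XOm aX) aC.
    + by rewrite -(def_pblock Htriv YOm aY) aC orbT.
  apply: (@leq_trans #|C|).
    by rewrite /tc2g_vcnum; apply: bigmin_le_cond.
  apply: leq_trans (leq_imset_card _ _) _.
  move: Hv; rewrite /deg (cardsD1 u0 (nbhd e v)) Hu0 /= => Hv; lia.
Qed.
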